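(* Let $d \geq 2$ and let $X$ be a $d$-dimensional simplicial complex on $n$ vertices with $\Delta(X) \leq K - 1$ for some integer $K \geq 5$. Then there exists a proper coloring $c$ of $V(X)$ using at most $18K^8 d^6 \lceil n^{1/d} \rceil$ colors such that no two $(d-1)$-dimensional faces of $X$ receive the same pattern under $c$.
   Context: For a finite simplicial complex $X$, $\mathrm{skel}_k(X)$ is the set of $k$-dimensional faces, $\Delta_{i,j}(X) = \max_{\sigma \in \mathrm{skel}_i(X)} |\{\tau \in \mathrm{skel}_j(X) : \sigma \subseteq \tau\}|$, and $\Delta(X) = \max_{i,j}\Delta_{i,j}(X)$. A coloring of $V(X)$ is proper if no two vertices joined by an edge receive the same color. The pattern of a face under a coloring is the multiset of colors of its vertices. *)

(* Defs.v *)
From mathcomp Require Import all_boot.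
Set Implicit Arguments. Unset Strict Implicit. Unset Printing Implicit Defensive.

(* A finite (abstract) simplicial complex on vertex type T: a family of
   nonempty finite vertex sets, closed under taking nonempty subsets.
   A face s has dimension #|s| - 1. *)
Definition simplicial_complex (T : finType) (X : {set {set T}}) : Prop :=
  set0 \notin X /\
  (forall s t : {set T}, t \in X -> s \subset t -> s != set0 -> s \in X).

Definition vertex_set_is_all (T : finType) (X : {set {set T}}) : Prop :=
  forall x : T, [set x] \in X.

Definition complex_dim (T : finType) (X : {set {set T}}) (d : nat) : Prop :=
  (exists2 s, s \in X & #|s| = d.+1) /\ (forall s, s \in X -> #|s| <= d.+1).

Definition skel (T : finType) (X : {set {set T}}) (k : nat) : {set {set T}} :=
  [set s in X | #|s| == k.+1].

Definition Delta_ij (T : finType) (X : {set {set T}}) (i j : nat) : nat :=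
  \max_(s in skel X i) #|[set t in skel X j | s \subset t]|.

(* Delta(X) = max_{i,j} Delta_{i,j}(X); faces have dimension <= #|T|,
   so the max over i, j < #|T|.+1 is the max over all i, j. *)
Definition Delta (T : finType) (X : {set {set T}}) : nat :=
  \max_(i < #|T|.+1) \max_(j < #|T|.+1) Delta_ij X i j.

Definition proper_coloring (T : finType) (X : {set {set T}}) (C : Type)
    (c : T -> C) : Prop :=
  forall x y : T, x != y -> [set x; y] \in X -> c x <> c y.

(* pattern of a face: multiset of colors of its vertices, represented by
   the color sequence up to permutation *)
Definition same_pattern (T : finType) (C : eqType) (c : T -> C)
    (s t : {set T}) : bool :=
  perm_eq [seq c x | x in s] [seq c x | x in t].

(* ceil_root d n = ceil (n^(1/d)) = least m with n <= m ^ d (for d >= 1) *)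
Definition ceil_root (d n : nat) : nat :=
  find (fun m => n <= m ^ d) (iota 0 n.+1).

(* Main.v *)
Require Import Defs.
From mathcomp Require Import all_boot zify.
Set Implicit Arguments. Unset Strict Implicit. Unset Printing Implicit Defensive.

Lemma card_bigcup_le (I T : finType) (P : pred I) (S : I -> {set T}) :
  #|\bigcup_(i | P i) S i| <= \sum_(i | P i) #|S i|.
Proof.
elim/big_rec2: _ => [|i U s _ IH]; first by rewrite cards0.
by rewrite cardsU (leq_trans (leq_subr _ _)) // leq_add2l.
Qed.

Lemma exists_notin (n : nat) (S : {set 'I_n}) : #|S| < n -> exists x, x \notin S.
Proof.
move=> hS; case: (boolP [exists x, x \notin S]) => [/existsP//|/existsPn H].
have eS : S = setT by apply/setP => x; rewrite inE; move: (H x); rewrite negbK.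
by move: hS; rewrite eS cardsT card_ord ltnn.
Qed.

Lemma sum_sub_le (I : finType) (A : pred I) (g : I -> nat) :
  \sum_(i in A) g i <= \sum_i g i.
Proof.
rewrite big_mkcond /=; apply: leq_sum => i _; by case: (i \in A).
Qed.

Lemma greedy_color (T : finType) (A : nat) (R : rel T) :
  0 < A -> symmetric R -> (forall v, ~~ R v v) ->
  (forall v, #|[set w | R v w]| < A) ->
  exists a : T -> 'I_A, forall v w, R v w -> a v != a w.
Proof.
move=> A0 Rsym Rirr Rdeg.
suff H : forall k, exists a : T -> 'I_A, forall v w, enum_rank v < k ->
    enum_rank w < k -> R v w -> a v != a w.
  have [a Ha] := H #|T|; exists a => v w; apply: Ha; exact: ltn_ord.
elim=> [|k [a Ha]]; first by exists (fun _ => Ordinal A0).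
have [v /eqP hv|hn] := pickP (fun v : T => nat_of_ord (enum_rank v) == k).
  have [x hx] : exists x, x \notin [set a w | w in [set w | R v w]].
    by apply: exists_notin; rewrite (leq_ltn_trans (leq_imset_card _ _)).
  exists (fun w => if w == v then x else a w) => v' w' hv' hw' hR.
  case: (eqVneq v' v) => [ev|nv]; case: (eqVneq w' v) => [ew|nw].
  - by move: hR; rewrite ev ew (negbTE (Rirr v)).
  - apply: contra hx => /eqP ->; apply: imset_f; by rewrite inE -ev.
  - apply: contra hx => /eqP <-; apply: imset_f; by rewrite inE Rsym -ew.
  - apply: (Ha v' w') => //.
    + by rewrite ltn_neqAle -ltnS hv' andbT; apply: contra nv => /eqP e;
        apply/eqP/enum_rank_inj/val_inj; rewrite /= e hv.
    + by rewrite ltn_neqAle -ltnS hw' andbT; apply: contra nw => /eqP e;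
        apply/eqP/enum_rank_inj/val_inj; rewrite /= e hv.
exists a => v' w' hv' hw'; apply: Ha.
  by rewrite ltn_neqAle -ltnS hv' andbT; apply/negP => /eqP e; move: (hn v'); rewrite e eqxx.
by rewrite ltn_neqAle -ltnS hw' andbT; apply/negP => /eqP e; move: (hn w'); rewrite e eqxx.
Qed.

Section Main.
Variables (T : finType) (X : {set {set T}}) (d K m : nat).
Hypotheses (hd : 2 <= d) (hK : 1 <= K) (hm : 0 < m) (hX : simplicial_complex X)
  (hnm : #|T| <= m ^ d).

Definition adj (v w : T) := (v != w) && ([set v; w] \in X).
Definition conf (v w : T) :=
  (v != w) && (adj v w || [exists u, adj v u && adj u w]).
Definition FF := skel X d.-1.

Hypothesis hFv : forall v, #|[set t in FF | v \in t]| <= K - 1.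
Hypothesis hNv : forall v, #|[set w | adj v w]| <= K - 1.

Lemma adj_sym : symmetric adj.
Proof. by move=> v w; rewrite /adj eq_sym setUC. Qed.

Lemma conf_sym : symmetric conf.
Proof.
move=> v w; rewrite /conf eq_sym adj_sym; congr (_ && (_ || _)).
apply/existsP/existsP => [[u /andP[h1 h2]]|[u /andP[h1 h2]]]; exists u;
  by apply/andP; split; rewrite adj_sym.
Qed.

Lemma conf_irr v : ~~ conf v v.
Proof. by rewrite /conf eqxx. Qed.

Lemma conf_deg v : #|[set w | conf v w]| < K ^ 2.
Proof.
set N := [set w | adj v w].
have sub : [set w | conf v w] \subset N :|: \bigcup_(u in N) [set w | adj u w].
  apply/subsetP => w; rewrite !inE /conf => /andP[_ /orP[->//|/existsP[u /andP[h1 h2]]]].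
  apply/orP; right; apply/bigcupP; exists u; by rewrite inE.
apply: (leq_ltn_trans (subset_leq_card sub)).
apply: (leq_ltn_trans (leq_card_setU _ _)).
have h2 : #|\bigcup_(u in N) [set w | adj u w]| <= #|N| * (K - 1).
  apply: (leq_trans (card_bigcup_le _ _)).
  rewrite -sum_nat_const; apply: leq_sum => u _; exact: hNv.
have h1 := hNv v.
have h3 : #|N| * (K - 1) <= (K - 1) * (K - 1) by rewrite leq_mul2r h1 orbT.
rewrite -/N -mulnn.
have h4 : (K - 1) + (K - 1) * (K - 1) < K * K.
  have -> : K = (K - 1).+1 by lia.
  rewrite subSS subn0 mulSn mulnS; lia.
exact: (leq_ltn_trans (leq_add h1 (leq_trans h2 h3)) h4).
Qed.

Lemma face_X t : t \in FF -> t \in X.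
Proof. by rewrite inE => /andP[]. Qed.

Lemma face_card t : t \in FF -> #|t| = d.
Proof. rewrite inE => /andP[_ /eqP ->]; by rewrite prednK // ltnW. Qed.

Lemma face_adj t v w : t \in FF -> v \in t -> w \in t -> v != w -> adj v w.
Proof.
move=> ht hv hw ne; rewrite /adj ne /=.
apply: (hX.2 _ t (face_X ht)).
  by apply/subsetP => z; rewrite !inE => /orP[]/eqP->.
by apply/set0Pn; exists v; rewrite !inE eqxx.
Qed.

Section WithA.
Variable a : T -> 'I_(K ^ 2).
Hypothesis ha : forall v w, conf v w -> a v != a w.

Lemma a_face t v w : t \in FF -> v \in t -> w \in t -> a v = a w -> v = w.
Proof.
move=> ht hv hw e; apply/eqP; apply: contraT => ne.
have := ha (v:=v) (w:=w); rewrite e eqxx /conf ne (face_adj ht hv hw ne) /=.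
by move=> /(_ isT).
Qed.

Lemma a_dist2 t1 t2 v w1 w2 : t1 \in FF -> t2 \in FF -> v \in t1 -> v \in t2 ->
  w1 \in t1 -> w2 \in t2 -> w1 != v -> w2 != v -> a w1 = a w2 -> w1 = w2.
Proof.
move=> h1 h2 hv1 hv2 hw1 hw2 n1 n2 e; apply/eqP; apply: contraT => ne.
have := ha (v:=w1) (w:=w2); rewrite e eqxx /conf ne /=; apply.
apply/orP; right; apply/existsP; exists v.
by rewrite (face_adj h1 hw1 hv1 n1) adj_sym (face_adj h2 hw2 hv2 n2).
Qed.

Definition nT := #|T|.
Definition r (w : T) := a w * nT + enum_rank w.

Lemma r_inj : injective r.
Proof.
move=> w1 w2 e.
have : r w1 %% nT = r w2 %% nT by rewrite e.
rewrite /r !modnMDl !modn_small ?ltn_ord // => e2.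
by apply: enum_rank_inj; apply: val_inj.
Qed.

Lemma r_lt_a w v : a w < a v -> r w < r v.
Proof.
move=> h; rewrite /r.
have h1 : (a w).+1 * nT <= a v * nT by rewrite leq_mul2r h orbT.
have h2 : enum_rank w < nT := ltn_ord _.
nia.
Qed.

Lemma r_le_a w v : r w <= r v -> a w <= a v.
Proof. by move=> h; rewrite leqNgt; apply/negP => /r_lt_a; rewrite ltnNge h. Qed.


Definition PP := 2 * K * m.
Definition LL := 2 * K * PP.
Definition BB j := PP ^ (d - j).

Lemma PP_gt0 : 0 < PP.
Proof. by rewrite /PP !muln_gt0 hK hm. Qed.

Definition col (b : T -> 'I_LL) (w : T) : 'I_(K ^ 2) * 'I_LL := (a w, b w).
Definition pre (t : {set T}) (be : nat) := [set w in t | a w < be].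
Definition UU k := [set w | r w < k].
Definition NN (b : T -> 'I_LL) k be (Q : {set 'I_(K ^ 2) * 'I_LL}) :=
  #|[set t in FF | (pre t be \subset UU k) && ([set col b w | w in pre t be] == Q)]|.
Definition Inv b k := forall be Q, NN b k be Q <= BB #|Q|.

Lemma col_inj_face b t : t \in FF -> {in t &, injective (col b)}.
Proof.
move=> ht w1 w2 h1 h2 e; apply: (a_face ht h1 h2).
by move: (congr1 fst e).
Qed.

Lemma FF_card : #|FF| <= PP ^ d.
Proof.
have sub : FF \subset \bigcup_(v : T) [set t in FF | v \in t].
  apply/subsetP => t ht.
  have : 0 < #|t| by rewrite (face_card ht) ltnW.
  rewrite card_gt0 => /set0Pn[v hv].
  by apply/bigcupP; exists v => //; rewrite inE ht hv.
apply: (leq_trans (subset_leq_card sub)).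
apply: (leq_trans (card_bigcup_le _ _)).
have e1 : \sum_(v : T) #|[set t in FF | v \in t]| <= #|T| * (K - 1).
  rewrite -sum_nat_const; apply: leq_sum => v _; exact: hFv.
apply: (leq_trans e1).
have e2 : 2 * K <= (2 * K) ^ d.
  by rewrite -{1}(expn1 (2 * K)) leq_pexp2l // ?muln_gt0 ?hK // ltnW.
rewrite /PP expnMn.
have e3 : #|T| * (K - 1) <= m ^ d * (2 * K) by apply: leq_mul => //; lia.
apply: (leq_trans e3); rewrite mulnC; exact: leq_mul.
Qed.

Lemma inv0 b : Inv b 0.
Proof.
move=> be Q.
case: (eqVneq Q set0) => [->|nQ].
  rewrite cards0 /BB subn0; apply: leq_trans FF_card.
  apply: subset_leq_card; apply/subsetP => t; rewrite inE => /andP[]//.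
suff -> : NN b 0 be Q = 0 by [].
apply/eqP; rewrite cards_eq0; apply/eqP/setP => t; rewrite !inE.
apply/negP => /andP[_ /andP[hs /eqP hq]].
have e : pre t be = set0.
  apply/eqP; rewrite -subset0; apply/subsetP => w hw.
  by move: (subsetP hs w hw); rewrite inE.
by move: nQ; rewrite -hq e imset0 eqxx.
Qed.

Section Step.
Variables (b : T -> 'I_LL) (k : nat) (v : T).
Hypothesis hinv : Inv b k.
Hypothesis hv : r v = k.

Lemma U1 w : a w < a v -> w \in UU k.
Proof. by move=> h; rewrite inE -hv; apply: r_lt_a. Qed.

Lemma U2 w : w \in UU k.+1 -> a w <= a v.
Proof. by rewrite inE ltnS -hv => /r_le_a. Qed.

Lemma U3 w : w \in UU k.+1 -> w != v -> w \in UU k.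
Proof.
rewrite !inE ltnS leq_eqVlt => /orP[/eqP e|//] ne.
by move: ne; rewrite (r_inj (etrans e (esym hv))) eqxx.
Qed.

Lemma UUk_sub : UU k \subset UU k.+1.
Proof. by apply/subsetP => w; rewrite !inE => /ltnW. Qed.

Definition bx (x : 'I_LL) (w : T) := if w == v then x else b w.
Definition Q0 t := [set col b w | w in pre t (a v)].
Definition II (Q' : {set 'I_(K ^ 2) * 'I_LL}) :=
  [set t in FF | (v \in t) && (Q0 t == Q')].
Definition ff Q' (x : 'I_LL) := NN b k (a v).+1 ((a v, x) |: Q').

Lemma Q0_lt t p : p \in Q0 t -> p.1 < a v.
Proof. by case/imsetP => w; rewrite inE => /andP[_ h] ->. Qed.

Lemma notin_Q0 t x : (a v, x) \notin Q0 t.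
Proof. by apply/negP => /Q0_lt; rewrite ltnn. Qed.

Lemma pre_S t : t \in FF -> v \in t -> pre t (a v).+1 = v |: pre t (a v).
Proof.
move=> ht hvt; apply/setP => w; rewrite !inE ltnS leq_eqVlt.
case: (eqVneq w v) => [->|ne]; first by rewrite hvt eqxx.
case hw: (w \in t) => //=.
case: (eqVneq (a w : nat) (a v)) => //= e.
by move: ne; rewrite (a_face ht hw hvt (val_inj e)) eqxx.
Qed.

Lemma col_S t x : t \in FF -> v \in t ->
  [set col (bx x) w | w in pre t (a v).+1] = (a v, x) |: Q0 t.
Proof.
move=> ht hvt; rewrite pre_S // imsetU1 /col /bx eqxx; congr (_ |: _).
apply: eq_in_imset => w; rewrite inE => /andP[_ h].
have : w != v by apply: contraTneq h => ->; rewrite ltnn.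
by move/negbTE => ->.
Qed.

Lemma card_Q0 t : t \in FF -> #|Q0 t| = #|pre t (a v)|.
Proof.
move=> ht; apply: card_in_imset => w1 w2; rewrite !inE => /andP[h1 _] /andP[h2 _] e.
exact: (col_inj_face (b:=b) ht h1 h2 e).
Qed.

Lemma pre_subD1 t : pre t (a v) \subset t :\ v.
Proof.
apply/subsetP => w; rewrite !inE => /andP[-> h]; rewrite andbT.
by apply: contraTneq h => ->; rewrite ltnn.
Qed.

Lemma card_tD1 t : t \in FF -> v \in t -> #|t :\ v| = d.-1.
Proof. by move=> ht hvt; move: (cardsD1 v t); rewrite hvt face_card // => ->. Qed.

Lemma Q0_le t : t \in FF -> v \in t -> #|Q0 t| <= d.-1.
Proof.
move=> ht hvt; rewrite card_Q0 // -(card_tD1 ht hvt).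
exact: subset_leq_card (pre_subD1 t).
Qed.

Lemma II_card Q' : #|II Q'| <= K - 1.
Proof.
apply: leq_trans (hFv v); apply: subset_leq_card; apply/subsetP => t.
by rewrite !inE => /andP[-> /andP[-> _]].
Qed.

Lemma pre_full t : t \in FF -> v \in t -> #|Q0 t| = d.-1 -> pre t (a v) = t :\ v.
Proof.
move=> ht hvt hc; apply/eqP; rewrite eqEcard pre_subD1 /=.
by rewrite card_tD1 // -hc card_Q0.
Qed.

Lemma II_le1 t : t \in FF -> v \in t -> #|Q0 t| = d.-1 -> #|II (Q0 t)| <= 1.
Proof.
move=> ht hvt hc.
have key : forall t1 t2, t1 \in II (Q0 t) -> t2 \in II (Q0 t) -> t1 \subset t2.
  move=> t1 t2 /setIdP[h1 /andP[hv1 /eqP e1]] /setIdP[h2 /andP[hv2 /eqP e2]].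
  have f1 : pre t1 (a v) = t1 :\ v by apply: pre_full => //; rewrite e1.
  have f2 : pre t2 (a v) = t2 :\ v by apply: pre_full => //; rewrite e2.
  apply/subsetP => w hw; case: (eqVneq w v) => [->//|ne].
  have : col b w \in Q0 t2.
    by rewrite e2 -e1; apply: imset_f; rewrite f1 !inE ne.
  case/imsetP => w2; rewrite f2 !inE => /andP[ne2 hw2] e.
  have ea : a w = a w2 by move: (congr1 fst e).
  by rewrite (a_dist2 h1 h2 hv1 hv2 hw hw2 ne ne2 ea).
apply/card_le1P => t1 h1 t2; apply/idP/idP => [h2|/eqP->//].
apply/eqP/eqP; rewrite eqEcard key //=.
move: h1 h2 => /setIdP[f1 _] /setIdP[f2 _].
by rewrite !face_card.
Qed.

Lemma key_sum (Q' : {set 'I_(K ^ 2) * 'I_LL}) : (forall p, p \in Q' -> p.1 < a v) ->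
  \sum_x ff Q' x <= NN b k (a v) Q'.
Proof.
move=> hQ.
pose S x := [set t in FF | (pre t (a v).+1 \subset UU k) &&
                 ([set col b w | w in pre t (a v).+1] == (a v, x) |: Q')].
pose S0 := [set t in FF | (pre t (a v) \subset UU k) &&
                 ([set col b w | w in pre t (a v)] == Q')].
have sub_pre t : pre t (a v) \subset pre t (a v).+1.
  by apply/subsetP => w; rewrite !inE => /andP[-> /ltnW].
have H1 x t : t \in S x -> t \in S0.
  rewrite !inE => /andP[hF /andP[hs /eqP he]]; rewrite hF (subset_trans (sub_pre t) hs) /=.
  apply/eqP/setP => p; apply/imsetP/idP => [[w hw ->]|hp].
    have : col b w \in (a v, x) |: Q'.
      by rewrite -he; apply: imset_f; apply: (subsetP (sub_pre t)).
    rewrite in_setU1 => /orP[/eqP e|//].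
    have ea : a w = a v by move: (congr1 fst e).
    by move: hw; rewrite inE ea ltnn andbF.
  have : p \in (a v, x) |: Q' by rewrite in_setU1 hp orbT.
  rewrite -he => /imsetP[w hw ep]; exists w => //.
  move: hw; rewrite !inE => /andP[-> _] /=.
  by have := hQ _ hp; rewrite ep.
have H2 x y t : t \in S x -> t \in S y -> x = y.
  rewrite !inE => /andP[_ /andP[_ /eqP ex]] /andP[_ /andP[_ /eqP ey]].
  have : (a v, x) \in (a v, y) |: Q' by rewrite -ey ex setU11.
  rewrite in_setU1 => /orP[/eqP [] //|/hQ]; by rewrite ltnn.
have E (I : finType) (A : {set I}) : #|A| = \sum_i (i \in A : nat).
  by rewrite -sum1_card big_mkcond /=; apply: eq_bigr => i _; case: (i \in A).
rewrite /ff /NN.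
rewrite (eq_bigr (fun x => \sum_t (t \in S x : nat))); last by move=> x _; rewrite E.
rewrite exchange_big /= [X in _ <= X]E; apply: leq_sum => t _.
case hS0: (t \in S0).
  have -> : \sum_x (t \in S x : nat) = #|[set x | t \in S x]|.
    by rewrite E; apply: eq_bigr => x _; rewrite inE.
  apply/card_le1P => x; rewrite inE => hx y; rewrite inE.
  apply/idP/eqP => [hy|->//]; exact: (H2 _ _ _ hy hx).
rewrite big1 // => x _; case hx: (t \in S x) => //.
by move: (H1 _ _ hx); rewrite hS0.
Qed.


Definition Bad t := [set x | BB #|Q0 t|.+1 < ff (Q0 t) x + #|II (Q0 t)|].

Lemma bad_card t : t \in FF -> v \in t -> #|Bad t| <= 2 * PP.
Proof.
move=> ht hvt.
set Q' := Q0 t; set j := #|Q'|.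
have hsum : \sum_x ff Q' x <= BB j := leq_trans (key_sum (@Q0_lt t)) (hinv _ _).
have hj : j <= d.-1 := Q0_le ht hvt.
have hBj : BB j = PP * BB j.+1.
  by rewrite /BB -expnS; congr (_ ^ _); lia.
have hBpos : 0 < BB j.+1 by rewrite /BB expn_gt0 PP_gt0.
have hB : forall x, x \in Bad t -> BB j.+1 <= 2 * ff Q' x.
  move=> x; rewrite inE -/Q' -/j => hx.
  have hI := II_card Q'.
  case: (ltnP j.+1 d) => hjd.
    have h1 : PP <= BB j.+1.
      by rewrite /BB -{1}(expn1 PP) leq_pexp2l ?PP_gt0 //; lia.
    have h2 : 2 * K <= PP by rewrite /PP leq_pmulr.
    lia.
  have ejd : j = d.-1 by lia.
  have hI1 := II_le1 ht hvt ejd.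
  have e1 : BB j.+1 = 1 by rewrite /BB; have -> : d - j.+1 = 0 by lia.
  rewrite e1 in hx *; rewrite -/Q' in hI1; lia.
have h1 : #|Bad t| * BB j.+1 <= 2 * (PP * BB j.+1).
  rewrite -sum_nat_const.
  apply: (@leq_trans (\sum_(x in Bad t) 2 * ff Q' x)).
    by apply: leq_sum.
  apply: leq_trans (sum_sub_le _ _) _.
  have e : \sum_x 2 * ff Q' x = 2 * \sum_x ff Q' x.
    under eq_bigr => x _ do rewrite mul2n -addnn.
    by rewrite big_split /= mul2n -addnn.
  by rewrite e -hBj leq_mul2l hsum orbT.
by rewrite mulnA leq_pmul2r // in h1.
Qed.

Definition good x := forall t, t \in FF -> v \in t ->
  ff (Q0 t) x + #|II (Q0 t)| <= BB #|Q0 t|.+1.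

Lemma exists_good : exists x, good x.
Proof.
set BU := \bigcup_(t in [set t in FF | v \in t]) Bad t.
have hc : #|BU| < LL.
  apply: leq_ltn_trans (card_bigcup_le _ _) _.
  have hs : \sum_(t in [set t in FF | v \in t]) #|Bad t|
          <= #|[set t in FF | v \in t]| * (2 * PP).
    rewrite -sum_nat_const; apply: leq_sum => t /setIdP[ht hvt]; exact: bad_card.
  apply: leq_ltn_trans hs _.
  have := hFv v; have := PP_gt0; rewrite /LL => h1 h2.
  have h3 : #|[set t in FF | v \in t]| * (2 * PP) <= (K - 1) * (2 * PP).
    by rewrite leq_mul2r h2 orbT.
  apply: leq_ltn_trans h3 _.
  have -> : 2 * K * PP = K * (2 * PP) by rewrite mulnCA mulnA.
  rewrite ltn_mul2r muln_gt0 h1 /=; lia.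
have [x hx] := exists_notin hc.
exists x => t ht hvt; rewrite leqNgt; apply: contra hx => hb.
apply/bigcupP; exists t; first by apply/setIdP.
by rewrite inE.
Qed.

Lemma good_inv x : good x -> Inv (bx x) k.+1.
Proof.
move=> hg be Q.
have hpre_eq : forall be', be' <= a v -> forall t,
    [set col (bx x) w | w in pre t be'] = [set col b w | w in pre t be'].
  move=> be' hb t; apply: eq_in_imset => w; rewrite inE => /andP[_ h].
  rewrite /col /bx; have -> : (w == v) = false; last by [].
  apply/negbTE; apply: contraTneq h => ->; by rewrite -leqNgt.
case: (leqP be (a v)) => hbe.
  have -> : NN (bx x) k.+1 be Q = NN b k be Q.
    rewrite /NN; apply: eq_card => t; rewrite !inE hpre_eq //.
    have s1 : pre t be \subset UU k.
      apply/subsetP => w; rewrite inE => /andP[_ h]; apply: U1.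
      exact: leq_trans h hbe.
    by rewrite s1 (subset_trans s1 UUk_sub).
  exact: hinv.
have step1 : NN (bx x) k.+1 be Q <= NN (bx x) k.+1 (a v).+1 Q.
  apply: subset_leq_card; apply/subsetP => t /setIdP[ht /andP[hs hq]].
  have ep : pre t be = pre t (a v).+1.
    apply/setP => w; rewrite !inE; case hw: (w \in t) => //=.
    apply/idP/idP => h.
      have : w \in pre t be by rewrite inE hw h.
      by move/(subsetP hs)/U2; rewrite ltnS.
    by rewrite ltnS in h; exact: leq_ltn_trans h hbe.
  by apply/setIdP; split => //; rewrite -ep hs hq.
apply: leq_trans step1 _.
pose S := [set t in FF | (pre t (a v).+1 \subset UU k) &&
             ([set col b w | w in pre t (a v).+1] == Q)].
pose J := [set t in FF | (v \in t) &&
             ([set col (bx x) w | w in pre t (a v).+1] == Q)].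
have sub : [set t in FF | (pre t (a v).+1 \subset UU k.+1) &&
             ([set col (bx x) w | w in pre t (a v).+1] == Q)] \subset S :|: J.
  apply/subsetP => t /setIdP[ht /andP[hs hq]].
  case hvt: (v \in t).
    by apply/setUP; right; apply/setIdP; split => //; rewrite hvt.
  apply/setUP; left; apply/setIdP; split => //.
  have eb : [set col (bx x) w | w in pre t (a v).+1] = [set col b w | w in pre t (a v).+1].
    apply: eq_in_imset => w; rewrite inE => /andP[hw _]; rewrite /col /bx.
    have -> : (w == v) = false; last by [].
    by apply/negbTE; apply: contraFneq hvt => <-.
  rewrite -eb hq andbT; apply/subsetP => w hw; apply: U3.
    exact: (subsetP hs).
  apply: contraFneq hvt => e; move: hw; rewrite inE e => /andP[]//.
rewrite /NN; apply: leq_trans (subset_leq_card sub) _.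
apply: leq_trans (leq_card_setU S J) _.
case: (set_0Vmem J) => [J0|[t0 ht0]].
  rewrite J0 cards0 addn0; exact: hinv.
move: (ht0) => /setIdP[ht0F /andP[hvt0 /eqP hq0]].
rewrite col_S // in hq0.
have hJ : J \subset II (Q0 t0).
  apply/subsetP => t /setIdP[ht /andP[hvt /eqP hq]].
  rewrite col_S // -hq0 in hq.
  apply/setIdP; split => //; rewrite hvt /=; apply/eqP.
  by rewrite -(setU1K (notin_Q0 t x)) hq setU1K // notin_Q0.
have hQ : #|Q| = #|Q0 t0|.+1 by rewrite -hq0 cardsU1 notin_Q0.
have := hg t0 ht0F hvt0.
rewrite /ff hq0 hQ => hle.
apply: leq_trans hle; apply: leq_add; [exact: leqnn | exact: subset_leq_card hJ].
Qed.

End Step.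

Lemma LL_gt0 : 0 < LL.
Proof. by rewrite /LL /PP !muln_gt0 hK hm. Qed.

Lemma inv_all k : exists b, Inv b k.
Proof.
elim: k => [|k [b hb]]; first by exists (fun _ => Ordinal LL_gt0); exact: inv0.
have [v /eqP hv|hn] := pickP (fun v => r v == k).
  have [x hx] := exists_good hb hv.
  by exists (bx b v x); apply: (good_inv hb hv hx).
exists b => be Q.
have eU : UU k.+1 = UU k by apply/setP => w; rewrite !inE ltnS leq_eqVlt hn.
rewrite /NN eU; exact: hb be Q.
Qed.

Lemma main_coloring : exists c : T -> 'I_(K ^ 2) * 'I_LL,
  (forall x y, x != y -> [set x; y] \in X -> c x != c y) /\
  (forall s t, s \in FF -> t \in FF -> s != t -> [set c w | w in s] != [set c w | w in t]).
Proof.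
have [b hb] := inv_all (K ^ 2 * nT).
exists (col b); split.
  move=> x y ne hxy.
  have hc : conf x y by rewrite /conf ne /adj ne hxy.
  apply: contra (ha hc) => /eqP e.
  by have -> : a x = a y by move: (congr1 fst e).
move=> s t hs ht ne; apply/negP => /eqP e.
have hU : forall w, w \in UU (K ^ 2 * nT).
  move=> w; rewrite inE /r.
  have h1 : a w < K ^ 2 := ltn_ord _.
  have h2 : enum_rank w < nT := ltn_ord _.
  have h3 : (a w).+1 * nT <= K ^ 2 * nT by rewrite leq_mul2r h1 orbT.
  nia.
have hpre : forall t, pre t (K ^ 2) = t.
  by move=> t'; apply/setP => w; rewrite inE ltn_ord andbT.
have hcard : #|[set col b w | w in s]| = d.
  by rewrite card_in_imset ?face_card //; apply: col_inj_face.
have := hb (K ^ 2) [set col b w | w in s].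
rewrite hcard /BB subnn expn0 /NN => h.
have c2 : #|[set s; t]| = 2 by rewrite cards2 ne.
suff : 2 <= 1 by [].
rewrite -{1}c2; apply: leq_trans h; apply: subset_leq_card.
apply/subsetP => u /set2P[->|->]; apply/setIdP; split => //;
  rewrite hpre ?e eqxx andbT; apply/subsetP => w _; exact: hU.
Qed.

End WithA.
End Main.

Lemma ceil_root_spec (d n : nat) : 0 < d -> 0 < n ->
  n <= ceil_root d n ^ d /\ 0 < ceil_root d n.
Proof.
move=> hd hn.
set p := fun m => n <= m ^ d.
have hh : has p (iota 0 n.+1).
  apply/hasP; exists n; first by rewrite mem_iota add0n ltnSn.
  by rewrite /p -{1}(expn1 n) leq_pexp2l.
have hf := nth_find 0 hh.
have hlt : find p (iota 0 n.+1) < n.+1 by have := hh; rewrite has_find size_iota.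
rewrite nth_iota // add0n in hf.
have e : ceil_root d n = find p (iota 0 n.+1) by [].
rewrite e; split => //.
rewrite lt0n; apply/negP => /eqP h0; move: hf; rewrite /p h0 exp0n //.
by rewrite leqn0; apply/negP; rewrite -lt0n.
Qed.

Theorem lemma3 (T : finType) (X : {set {set T}}) (d K : nat) :
  2 <= d -> 5 <= K ->
  simplicial_complex X -> vertex_set_is_all X -> complex_dim X d ->
  Delta X <= K - 1 ->
  exists c : T -> 'I_(18 * K ^ 8 * d ^ 6 * ceil_root d #|T|),
    proper_coloring X c /\
    (forall s t, s \in skel X d.-1 -> t \in skel X d.-1 -> s != t ->
       ~~ same_pattern c s t).
Proof.
move=> hd hK5 hX hall hdim hD.
have hK : 0 < K by apply: leq_trans hK5.
have hn : d.+1 <= #|T|.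
  by case: hdim => [[s _ hs] _]; rewrite -hs max_card.
have hDij : forall i j, i < #|T|.+1 -> j < #|T|.+1 -> Delta_ij X i j <= K - 1.
  move=> i j hi hj; apply: leq_trans hD; rewrite /Delta.
  apply: (leq_trans _ (leq_bigmax (Ordinal hi))) => /=.
  exact: (leq_trans _ (leq_bigmax (Ordinal hj))).
have hv0 : forall v j, j < #|T|.+1 -> #|[set t in skel X j | v \in t]| <= K - 1.
  move=> v j hj; apply: leq_trans (hDij 0 j isT hj).
  have hs : [set v] \in skel X 0 by rewrite inE hall cards1.
  rewrite /Delta_ij; apply: (leq_trans _ (leq_bigmax_cond _ hs)) => /=.
  apply: subset_leq_card; apply/subsetP => t /setIdP[h1 h2].
  by apply/setIdP; split => //; rewrite sub1set.
have hFv : forall v, #|[set t in FF X d | v \in t]| <= K - 1.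
  move=> v; apply: hv0; lia.
have hNv : forall v, #|[set w | adj X v w]| <= K - 1.
  move=> v; apply: leq_trans (hv0 v 1 _); last by lia.
  rewrite -(@card_in_imset _ _ (fun w => [set v; w]) [set w | adj X v w]).
    apply: subset_leq_card; apply/subsetP => e /imsetP[w hw ->].
    move: hw; rewrite inE => /andP[ne hw].
    apply/setIdP; split; last by rewrite set21.
    by rewrite inE hw cards2 ne.
  move=> w1 w2; rewrite !inE => /andP[n1 _] /andP[n2 _] e.
  have : w1 \in [set v; w2] by rewrite -e set22.
  rewrite in_set2 => /orP[/eqP h|/eqP//].
  by rewrite h eqxx in n1.
set m := ceil_root d #|T|.
have [hnm hm] : #|T| <= m ^ d /\ 0 < m.
  apply: ceil_root_spec; [exact: ltnW | exact: leq_trans hn].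
have hK2 : 0 < K ^ 2 by rewrite expn_gt0 hK.
have [a ha] := greedy_color hK2 (@conf_sym T X) (@conf_irr T X)
                 (conf_deg hd hK hm hnm hNv).
have [c0 [hc1 hc2]] := main_coloring hd hK hm hX hnm hFv ha.
have hle : #|{: 'I_(K ^ 2) * 'I_(LL K m)}| <= 18 * K ^ 8 * d ^ 6 * m.
  rewrite card_prod !card_ord /LL /PP.
  have e : K ^ 2 * (2 * K * (2 * K * m)) = 4 * (K ^ 4 * m).
    rewrite !expnS expn0; lia.
  rewrite e.
  have h1 : K ^ 4 <= K ^ 8 by rewrite leq_pexp2l.
  have h2 : 0 < d ^ 6 by rewrite expn_gt0; lia.
  apply: (@leq_trans (18 * (K ^ 8 * m))).
    by apply: leq_mul => //; apply: leq_mul.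
  apply: (@leq_trans (18 * K ^ 8 * 1 * m)); first by rewrite muln1 mulnA.
  by apply: leq_mul => //; apply: leq_mul.
pose enc := fun p : 'I_(K ^ 2) * 'I_(LL K m) => widen_ord hle (enum_rank p).
have enc_inj : injective enc.
  by move=> p q /(congr1 val) /= /val_inj /enum_rank_inj.
exists (fun w => enc (c0 w)); split.
  move=> x y ne hxy e; move: (hc1 x y ne hxy); by rewrite (enc_inj _ _ e) eqxx.
move=> s t hs ht ne; apply/negP => hp.
have hm' := perm_mem hp.
suff : [set c0 w | w in s] = [set c0 w | w in t] by apply/eqP; exact: hc2.
have H : forall s' t' : {set T}, (forall y, (y \in [seq enc (c0 x) | x in s']) =
      (y \in [seq enc (c0 x) | x in t'])) ->
      [set c0 w | w in s'] \subset [set c0 w | w in t'].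
  move=> s' t' hst; apply/subsetP => p /imsetP[w hw ->].
  have : enc (c0 w) \in [seq enc (c0 x) | x in t'].
    by rewrite -hst; apply: (image_f (fun x => enc (c0 x))).
  case/imageP => w' hw' /enc_inj ->; exact: imset_f.
apply/eqP; rewrite eqEsubset !H // => y; by rewrite hm'.
Qed.
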